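(* Let $n>k\geq3$ be odd integers, $A$ a cyclically $k$-diagonal $n\times n$ array, $g=\gcd(n,k-1)$, $m=n/g$, $\ell=(k-1)/g$, and $I_j=[1+(j-1)g,jg]$ for $j\in[1,m]$. Suppose there exists $E\subseteq[1,n]$ with $|E|=\frac{k-1}{2}+\frac{g-1}{2}$ such that there exist an integer $i\in[1,\ell-1]$, indices $j_1<j_2<\dots<j_{i+1}$ in $[1,m]$ with $j_{s+1}-j_s\equiv-\ell\pmod m$ for $s\in[1,i]$, and $f\in[1,g-1]$, with $E=\big(I_{j_1}\cup\dots\cup I_{j_{i+1}}\big)\setminus[j_{i+1}g-f+1,j_{i+1}g]$. Then there exists a solution to $P(A)$.
   Context: Arrays are partially filled and toroidal; $F(A)$ is the set of filled cells. $s_R(i,j)=(i,j+t)$, $s_C(i,j)=(i+t,j)$ with $t\ge1$ minimal such that the cell is filled. For $R,C\in\{-1,1\}^n$, $CN_{RC}(i,j)=s_C^{c_{j'}}(i,j')$ where $(i,j')=s_R^{r_i}(i,j)$. A solution to $P(A)$ is a pair $R,C$ such that $CN_{RC}$ is a permutation of $F(A)$ forming a single cycle of length $|F(A)|$. An $n\times n$ array is cyclically $k$-diagonal if its filled cells are exactly the $(i,j)$ with $i-j\bmod n\in\{0,\dots,k-1\}$. *)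

(* Defs.v *)
From mathcomp Require Import all_boot all_algebra.
Set Implicit Arguments. Unset Strict Implicit. Unset Printing Implicit Defensive.

(* Arrays: n x n toroidal arrays, cells are 'I_n * 'I_n (0-based indices);
   an array is represented by its set of filled cells F(A). *)

Lemma modn_ord_lt n (x : 'I_n) m : m %% n < n.
Proof. by rewrite ltn_pmod // (leq_ltn_trans (leq0n x) (ltn_ord x)). Qed.

(* m mod n as an element of 'I_n (x only witnesses n > 0) *)
Definition ordmod n (x : 'I_n) (m : nat) : 'I_n := Ordinal (modn_ord_lt x m).

(* s_R^r (i,j) for r = 1 (forward) or r = -1 (the inverse map: backward):
   (i, j + r t) with t >= 1 minimal such that the cell is filled. *)
Definition sR n (A : {set 'I_n * 'I_n}) (r : int) (c : 'I_n * 'I_n)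
  : 'I_n * 'I_n :=
  let cell t := (c.1, ordmod c.2 (if r == 1%Z then c.2 + t else c.2 + n - t)) in
  let ts := iota 1 n in
  cell (nth 0 ts (find (fun t => cell t \in A) ts)).

(* s_C^r (i,j) = (i + r t, j) with t >= 1 minimal such that the cell is filled *)
Definition sC n (A : {set 'I_n * 'I_n}) (r : int) (c : 'I_n * 'I_n)
  : 'I_n * 'I_n :=
  let cell t := (ordmod c.1 (if r == 1%Z then c.1 + t else c.1 + n - t), c.2) in
  let ts := iota 1 n in
  cell (nth 0 ts (find (fun t => cell t \in A) ts)).

Definition CN n (A : {set 'I_n * 'I_n}) (R C : 'I_n -> int)
  (c : 'I_n * 'I_n) : 'I_n * 'I_n :=
  let c' := sR A (R c.1) c in sC A (C c'.2) c'.

(* R, C in {-1,1}^n is a solution to P(A): CN_{RC} is a permutation of F(A)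
   forming a single cycle of length |F(A)|. *)
Definition is_solution n (A : {set 'I_n * 'I_n}) (R C : 'I_n -> int) : Prop :=
  [/\ forall i, R i = 1%Z \/ R i = (-1)%Z,
      forall j, C j = 1%Z \/ C j = (-1)%Z,
      {in A, forall c, CN A R C c \in A},
      {in A &, injective (CN A R C)} &
      {in A &, forall c d, exists t, iter t (CN A R C) c = d}].

Definition cyc_diag n (k : nat) (A : {set 'I_n * 'I_n}) : Prop :=
  A = [set c : 'I_n * 'I_n | (c.1 + n - c.2) %% n < k].

(* Main.v *)
Require Import Defs.
From mathcomp Require Import all_boot all_algebra zify.
Set Implicit Arguments. Unset Strict Implicit. Unset Printing Implicit Defensive.

Lemma nth_find_iota (P : pred nat) a N t0 :
  a <= t0 < a + N -> P t0 -> (forall t, a <= t < t0 -> ~~ P t) ->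
  nth 0 (iota a N) (find P (iota a N)) = t0.
Proof.
elim: N a => [|N IH] a; first by lia.
move=> H Pt Hn /=.
case: ifP => Pa /=; first by case: (ltngtP a t0) => // h; [by rewrite (negbTE (Hn a _)) in Pa; lia| lia].
have ha : a != t0 by apply/eqP=> e; rewrite e Pt in Pa.
apply: IH => //; first lia.
move=> t ht; apply: Hn; lia.
Qed.

Lemma diffmodE n a b d : 0 < n -> a = b + d %[mod n] -> (a %% n + n - b %% n) %% n = d %% n.
Proof.
move=> n0 H.
have hb : b %% n < n by rewrite ltn_pmod.
set X := a %% n + n - b %% n.
have HX : X + b %% n = a %% n + n by rewrite /X; lia.
apply/eqP; rewrite -(eqn_modDr b) -modnDmr HX -modnDml modn_mod modnDr H addnC.
by rewrite modn_mod.
Qed.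

Section CNsec.
Variables (n k : nat) (A : {set 'I_n * 'I_n}) (isE : nat -> bool).
Hypotheses (HA : cyc_diag k A) (Hk2 : 2 <= k) (Hkn : k < n).

Lemma n_gt0 : 0 < n. Proof. lia. Qed.
Definition mk (v : nat) : 'I_n := Ordinal (ltn_pmod v n_gt0).
Definition Phi (x : nat * nat) := (mk (x.1 + x.2), mk x.1).

Lemma memA (x y : 'I_n) : ((x, y) \in A) = ((x + n - y) %% n < k).
Proof. by rewrite HA inE. Qed.

Lemma sR1E (c : 'I_n * 'I_n) t0 : 0 < t0 <= n ->
  (c.1, ordmod c.2 (c.2 + t0)) \in A ->
  (forall t, 0 < t < t0 -> (c.1, ordmod c.2 (c.2 + t)) \notin A) ->
  sR A 1%Z c = (c.1, ordmod c.2 (c.2 + t0)).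
Proof.
move=> ht Ht Hn; rewrite /sR /=.
by rewrite (@nth_find_iota _ 1 n t0) //; lia.
Qed.

Lemma sC1E (c : 'I_n * 'I_n) t0 : 0 < t0 <= n ->
  (ordmod c.1 (c.1 + t0), c.2) \in A ->
  (forall t, 0 < t < t0 -> (ordmod c.1 (c.1 + t), c.2) \notin A) ->
  sC A 1%Z c = (ordmod c.1 (c.1 + t0), c.2).
Proof.
move=> ht Ht Hn; rewrite /sC /=.
by rewrite (@nth_find_iota _ 1 n t0) //; lia.
Qed.

Lemma sCm1E (c : 'I_n * 'I_n) t0 : 0 < t0 <= n ->
  (ordmod c.1 (c.1 + n - t0), c.2) \in A ->
  (forall t, 0 < t < t0 -> (ordmod c.1 (c.1 + n - t), c.2) \notin A) ->
  sC A (-1)%Z c = (ordmod c.1 (c.1 + n - t0), c.2).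
Proof.
move=> ht Ht Hn; rewrite /sC /=.
by rewrite (@nth_find_iota _ 1 n t0) //; lia.
Qed.


Lemma valmk v : val (mk v) = v %% n. Proof. by []. Qed.
Lemma valordmod (x : 'I_n) v : val (ordmod x v) = v %% n. Proof. by []. Qed.

Lemma memAd (x y : 'I_n) a b d : val x = a %% n -> val y = b %% n ->
  a = b + d %[mod n] -> ((x,y) \in A) = (d %% n < k).
Proof. by move=> hx hy H; rewrite memA hx hy (diffmodE n_gt0 H). Qed.

Lemma rowstep j D : D < k ->
  sR A 1%Z (Phi (j,D)) =
  Phi (j + (if D != 0 then 1 else n - k.-1), if D != 0 then D.-1 else k.-1).
Proof.
move=> HD; have n0 := n_gt0.
case: D HD => [|D] HD /=.
- rewrite (@sR1E _ (n - k.-1)); first last.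
  + move=> t ht; rewrite (@memAd _ _ (j + 0) (j %% n + t) (n - t)) //.
      rewrite modn_small; lia.
    by rewrite addn0 -addnA subnKC ?modnDml ?modnDr //; lia.
  + rewrite (@memAd _ _ (j + 0) (j %% n + (n - k.-1)) k.-1) //.
      rewrite modn_small; lia.
    by rewrite addn0 -addnA subnK ?modnDml ?modnDr //; lia.
  + lia.
  congr pair; apply: val_inj => /=.
    by rewrite addn0 -addnA subnK ?modnDr //; lia.
  by rewrite modnDml.
rewrite (@sR1E _ 1); first last.
  + move=> t ht; lia.
  + rewrite (@memAd _ _ (j + D.+1) (j %% n + 1) D) //.
      rewrite modn_small; lia.
    by rewrite -addnA modnDml addnC.
  + lia.
congr pair; apply: val_inj => /=.
  by rewrite -addnA add1n.
by rewrite modnDml.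
Qed.
Lemma colstep_p j1 D1 : D1 < k ->
  sC A 1%Z (Phi (j1,D1)) = Phi (j1, if D1 != k.-1 then D1.+1 else 0).
Proof.
move=> HD; have n0 := n_gt0.
have hm : forall t, ((j1 + D1) %% n + t) = j1 + (D1 + t) %[mod n].
  by move=> t; rewrite modnDml addnA.
case: eqP => [hD|hne] /=.
- rewrite (@sC1E _ (n - k.-1)); first last.
  + move=> t ht; rewrite (@memAd _ _ ((j1 + D1) %% n + t) j1 (D1 + t)) //; try by rewrite hm.
      rewrite modn_small; lia.
  + rewrite (@memAd _ _ ((j1 + D1) %% n + (n - k.-1)) j1 (D1 + (n - k.-1))) //; try by rewrite hm.
      rewrite hD subnKC ?modnn; lia.
  + lia.
  congr pair; apply: val_inj => /=.
  by rewrite modnDml -addnA hD subnKC ?modnDr ?addn0 //; lia.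
rewrite (@sC1E _ 1); first last.
  + move=> t ht; lia.
  + rewrite (@memAd _ _ ((j1 + D1) %% n + 1) j1 (D1 + 1)) //; try by rewrite hm.
      rewrite modn_small; lia.
  + lia.
congr pair; apply: val_inj => /=.
by rewrite modnDml -addnA addn1.
Qed.

Lemma colstep_m j1 D1 : D1 < k ->
  sC A (-1)%Z (Phi (j1,D1)) = Phi (j1, if D1 != 0 then D1.-1 else k.-1).
Proof.
move=> HD; have n0 := n_gt0.
have hm : forall t, t <= n -> ((j1 + D1) %% n + n - t) = j1 + (D1 + (n - t)) %[mod n].
  by move=> t ht; rewrite -addnBA // modnDml addnA.
case: D1 HD hm => [|D1] HD hm /=.
- rewrite (@sCm1E _ (n - k.-1)); first last.
  + move=> t ht; rewrite (@memAd _ _ ((j1 + 0) %% n + n - t) j1 (n - t)) //; try by rewrite hm.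
      rewrite modn_small; lia.
    by rewrite hm //; lia.
  + rewrite (@memAd _ _ ((j1 + 0) %% n + n - (n - k.-1)) j1 k.-1) //; try by rewrite hm.
      rewrite modn_small; lia.
    by rewrite hm ?add0n ?subKn //; lia.
  + lia.
  congr pair; apply: val_inj => /=.
  by rewrite hm ?add0n ?subKn //; lia.
rewrite (@sCm1E _ 1); first last.
  + move=> t ht; lia.
  + rewrite (@memAd _ _ ((j1 + D1.+1) %% n + n - 1) j1 D1) //; try by rewrite hm.
      rewrite modn_small; lia.
  rewrite hm //; have -> : j1 + (D1.+1 + (n - 1)) = (j1 + D1) + n by lia.
    by rewrite modnDr.
  + lia.
congr pair; apply: val_inj => /=.
rewrite hm //; have -> : j1 + (D1.+1 + (n - 1)) = (j1 + D1) + n by lia.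
by rewrite modnDr.
Qed.
Definition Rf : 'I_n -> int := fun _ => 1%Z.
Definition Cf : 'I_n -> int := fun j => if isE j then (-1)%Z else 1%Z.
Definition dec D := (D + k - 2) %% k.
Definition step (x : nat * nat) : nat * nat :=
  let j := x.1 in let D := x.2 in
  if D != 0 then ((j.+1) %% n, if isE ((j.+1) %% n) then dec D else D)
  else ((j + (n - k.-1)) %% n, if isE ((j + (n - k.-1)) %% n) then k - 2 else 0).

Lemma Phi_mod j D : Phi (j %% n, D) = Phi (j, D).
Proof. by congr pair; apply: val_inj => /=; rewrite ?modnDml ?modn_mod. Qed.

Lemma CN_Phi j D : D < k -> CN A Rf Cf (Phi (j,D)) = Phi (step (j,D)).
Proof.
move=> HD; rewrite /CN /Rf rowstep //= /Cf /step /=.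
case: D HD => [|D] HD /=.
- case: ifP => hE.
  + rewrite colstep_m /=; last lia.
    have -> : (k.-1 != 0) = true by apply/eqP; lia.
    by rewrite Phi_mod; congr Phi; congr pair; lia.
  + rewrite colstep_p /=; last lia.
    by rewrite eqxx Phi_mod.
- rewrite addn1; case: ifP => hE.
  + rewrite colstep_m /=; last lia.
    rewrite Phi_mod /dec; case: D HD => [|D] HD /=.
      by congr Phi; congr pair; rewrite modn_small; lia.
    have -> : D.+2 + k - 2 = D + k by lia.
    by rewrite modnDr modn_small //; lia.
  + rewrite colstep_p /=; last lia.
    have -> : (D != k.-1) = true by apply/eqP; lia.
    by rewrite Phi_mod.
Qed.

Definition back (y : nat * nat) : nat * nat :=
  let j' := y.1 in let D' := y.2 in
  let D := if isE j' then (D' + 2) %% k else D' in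
  if D != 0 then ((j' + n - 1) %% n, D) else ((j' + k.-1) %% n, 0).

Lemma back_step x : x.1 < n -> x.2 < k -> back (step x) = x.
Proof.
case: x => j D /= hj hD; have n0 := n_gt0.
rewrite /step /=; case: (posnP D) => [->|hD0] /=.
- case: ifP => hE; rewrite /back /= hE.
  + have -> : (k - 2 + 2) %% k = 0 by rewrite subnK ?modnn.
    rewrite /= modnDml -addnA subnK; last lia.
    by rewrite modnDr modn_small.
  + by rewrite /= modnDml -addnA subnK ?modnDr ?modn_small //; lia.
- have hD' : (D != 0) = true by apply/eqP; lia.
  case: ifP => hE; rewrite /back /= hE.
  + rewrite /dec modnDml.
    have -> : D + k - 2 + 2 = D + k by lia.
    rewrite modnDr modn_small // hD' /=.
    have -> : j.+1 %% n + n - 1 = j.+1 %% n + n.-1 by lia.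
    by rewrite modnDml -addn1 -addnA add1n prednK // modnDr modn_small.
  + rewrite hD' /=.
    have -> : j.+1 %% n + n - 1 = j.+1 %% n + n.-1 by lia.
    by rewrite modnDml -addn1 -addnA add1n prednK // modnDr modn_small.
Qed.

Lemma step_valid x : x.2 < k -> (step x).1 < n /\ (step x).2 < k.
Proof.
case: x => j D /= hD; have n0 := n_gt0; rewrite /step /=.
case: ifP => _ /=; split; rewrite ?ltn_pmod //.
  by case: ifP => _ //; rewrite /dec ltn_pmod //; lia.
by case: ifP => _ //; lia.
Qed.

Lemma Phi_in x : x.2 < k -> Phi x \in A.
Proof.
case: x => j D /= hD.
rewrite (@memAd _ _ (j + D) j D) // modn_small //; lia.
Qed.

Lemma Phi_onto c : c \in A -> exists x, [/\ x.1 < n, x.2 < k & c = Phi x].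
Proof.
case: c => a b hc; exists (nat_of_ord b, (a + n - b) %% n); split => //=.
  by move: hc; rewrite memA.
congr pair; apply: val_inj => /=; last by rewrite modn_small.
rewrite modnDmr.
have hb := ltn_ord b; have ha := ltn_ord a.
have -> : b + (a + n - b) = a + n by lia.
by rewrite modnDr modn_small.
Qed.

Lemma Phi_inj x y : x.1 < n -> x.2 < k -> y.1 < n -> y.2 < k -> Phi x = Phi y -> x = y.
Proof.
case: x => j D; case: y => j' D' /= hj hD hj' hD' [] e1 e2.
have ej : j = j' by rewrite -(modn_small hj) -(modn_small hj').
subst j'; congr pair.
move/eqP: e1; rewrite eqn_modDl => /eqP.
by rewrite !modn_small //; lia.
Qed.

Lemma iter_valid t x : x.1 < n -> x.2 < k ->
  (iter t step x).1 < n /\ (iter t step x).2 < k.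
Proof.
move=> h1 h2; elim: t => [|t [_ IH]] //=.
exact: step_valid.
Qed.

Lemma iter_Phi t x : x.2 < k -> iter t (CN A Rf Cf) (Phi x) = Phi (iter t step x).
Proof.
move=> hx; elim: t => [|t IH] //=.
rewrite IH.
have : (iter t step x).2 < k.
  by elim: t {IH} => [|t IHt] //=; case: (step_valid IHt).
by case: (iter t step x) => a b /= hb; rewrite CN_Phi.
Qed.

Lemma CN_in c : c \in A -> CN A Rf Cf c \in A.
Proof.
case/Phi_onto => [[j D] [/= hj hD ->]].
rewrite CN_Phi //; apply: Phi_in; by case: (@step_valid (j, D)).
Qed.

Lemma CN_inj : {in A &, injective (CN A Rf Cf)}.
Proof.
move=> c d /Phi_onto [x [hx1 hx2 ->]] /Phi_onto [y [hy1 hy2 ->]].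
case: x hx1 hx2 => j D hx1 hx2; case: y hy1 hy2 => j' D' hy1 hy2.
rewrite !CN_Phi // => e.
have [v1 v2] := @step_valid (j, D) hx2.
have [w1 w2] := @step_valid (j', D') hy2.
have := Phi_inj v1 v2 w1 w2 e => e'.
by rewrite -(@back_step (j, D)) // -(@back_step (j', D')) // e'.
Qed.

Lemma solution_of_reach x0 : x0.1 < n -> x0.2 < k ->
  (forall x, x.1 < n -> x.2 < k -> exists t, iter t step x = x0) ->
  is_solution A Rf Cf.
Proof.
move=> h01 h02 Hr; split.
- by move=> i; left.
- by move=> j; rewrite /Cf; case: (isE j); [right|left].
- exact: CN_in.
- exact: CN_inj.
pose f' c := if c \in A then CN A Rf Cf c else c.
have f'inj : injective f'.
  move=> a b; rewrite /f'; case: ifP => ha; case: ifP => hb.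
  - exact: CN_inj.
  - by move=> e; move: (CN_in ha); rewrite e hb.
  - by move=> e; move: (CN_in hb); rewrite -e ha.
  - by [].
have iterf : forall t c, c \in A -> iter t f' c = iter t (CN A Rf Cf) c.
  move=> t c hc; elim: t => [|t IH] //=.
  rewrite IH /f'.
  have -> // : iter t (CN A Rf Cf) c \in A.
  by elim: t {IH} => [|t IHt] //=; apply: CN_in.
have reach0 : forall c, c \in A -> fconnect f' c (Phi x0).
  move=> c /Phi_onto [x [hx1 hx2 ->]].
  have [t ht] := Hr x hx1 hx2.
  rewrite -ht -iter_Phi // -iterf; last exact: Phi_in.
  exact: fconnect_iter.
move=> c d hc hd.
have : fconnect f' c d.
  apply: connect_trans (reach0 c hc) _.
  by rewrite fconnect_sym //; apply: reach0.
move/iter_findex => e; exists (findex f' c d).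
by rewrite -iterf.
Qed.
End CNsec.

Section Dyn.
Variables (n k g m i0 h : nat).
Hypotheses (Hg : g = h.*2.+1) (Hh : 0 < h) (Hi0 : 0 < i0) (Hn : n = g * m)
  (Hk : k = (g * (2 * i0)).+1) (Hml : 2 * i0 < m) (Hfit : i0 * (m - 2 * i0) < m)
  (Hcop : coprime m (m - 2 * i0)).

Definition w := m - 2 * i0.
Definition s := i0 * g + h.
Definition isE y := has (fun t => (y %/ g == t * w) && ((t < i0) || (y %% g < h))) (iota 0 i0.+1).
Definition e p := (p %/ g) * w * g + p %% g.
Definition nu x := if x + g < s then x + g else x %% g.

Lemma g_gt0 : 0 < g. Proof. lia. Qed.
Lemma w_gt0 : 0 < w. Proof. rewrite /w; lia. Qed.
Lemma nk_eq : n - k.-1 = w * g.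
Proof. rewrite Hn Hk /w /= mulnBl [m * g]mulnC; congr (_ - _); lia. Qed.

Lemma e_div p : e p %/ g = (p %/ g) * w.
Proof. by rewrite /e divnMDl ?g_gt0 // (divn_small (ltn_pmod _ g_gt0)) addn0. Qed.
Lemma e_mod p : e p %% g = p %% g.
Proof. by rewrite /e modnMDl modn_mod. Qed.

Lemma divs p : p < s -> p %/ g <= i0.
Proof.
move=> hp; rewrite -ltnS ltn_divLR ?g_gt0 //; rewrite /s in hp; lia.
Qed.

Lemma e_lt p : p < s -> e p < n.
Proof.
move=> hp; have hq := divs hp; have hr : p %% g < g by rewrite ltn_pmod ?g_gt0.
rewrite /e Hn.
have h1 : p %/ g * w <= i0 * w by rewrite leq_mul2r hq orbT.
have h2 : (p %/ g * w).+1 <= m by rewrite /w in h1 *; lia.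
have : (p %/ g * w).+1 * g <= m * g by rewrite leq_mul2r h2 orbT.
rewrite mulSn; lia.
Qed.

Lemma e_isE p : p < s -> isE (e p).
Proof.
move=> hp; apply/hasP; exists (p %/ g); first by rewrite mem_iota /= add0n ltnS divs.
rewrite e_div e_mod eqxx /=.
have hq := divs hp.
case: (ltngtP (p %/ g) i0) => hq' //; first lia.
rewrite ?ltnn /=.
move: hp; rewrite /s (divn_eq p g) hq' modnMDl modn_mod; lia.
Qed.

Lemma n_pos : 0 < n. Proof. rewrite Hn muln_gt0 g_gt0; lia. Qed.
Lemma k2 : 2 <= k. Proof. rewrite Hk; have := g_gt0; nia. Qed.
Lemma s_ge : g <= s. Proof. by rewrite /s; have := g_gt0; nia. Qed.
Lemma gs : 2 * h < g. Proof. lia. Qed.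
Lemma km1 : k.-1 = 2 * (i0 * g). Proof. rewrite Hk /=; lia. Qed.
Lemma e_small q : q < g -> e q = q.
Proof. by move=> hq; rewrite /e divn_small // modn_small. Qed.
Lemma isE_small q : q < g -> isE q.
Proof. move=> hq; rewrite -{1}(e_small hq); apply: e_isE; have := s_ge; lia. Qed.

Lemma E_char y : isE y -> exists p, p < s /\ e p = y.
Proof.
case/hasP => t; rewrite mem_iota add0n ltnS => /andP [_ ht] /andP [/eqP hy hc].
have hr : y %% g < g by rewrite ltn_pmod ?g_gt0.
exists (t * g + y %% g); split.
  case: (ltnP t i0) => hti.
    have : t.+1 * g <= i0 * g by rewrite leq_mul2r hti orbT.
    rewrite mulSn /s; lia.
  have ti : t = i0 by lia.
  move: hc; rewrite ti ltnn /= /s => hc; lia.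
rewrite /e divnMDl ?g_gt0 // (divn_small hr) addn0 modnMDl modn_mod -hy.
by rewrite -divn_eq.
Qed.

Definition st := step n k isE.
Definition reach x y := exists t, iter t st x = y.
Lemma reach_refl x : reach x x. Proof. by exists 0. Qed.
Lemma reach_trans x y z : reach x y -> reach y z -> reach x z.
Proof. by case=> a <- [b <-]; exists (b + a); rewrite iterD. Qed.

Lemma walk N x D : D != 0 -> (forall r, 0 < r < N -> ~~ isE ((x + r) %% n)) -> 0 < N ->
  iter N st (x, D) = ((x + N) %% n, if isE ((x + N) %% n) then dec k D else D).
Proof.
move=> hD; elim: N => [//|N IH] hr _.
case: (posnP N) => [->|hN]; first by rewrite /= /st /step /= hD addn1.
rewrite iterS IH //; last by move=> r hr'; apply: hr; lia.
have := hr N; rewrite hN ltnSn => /(_ isT) /negbTE ->.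
rewrite /st /step /= hD.
have -> : ((x + N) %% n).+1 %% n = (x + N.+1) %% n.
  by rewrite -addn1 modnDml; congr (_ %% _); lia.
by [].
Qed.

Lemma jump N x : (forall r, 0 < r < N -> ~~ isE ((x + r * (n - k.-1)) %% n)) -> 0 < N ->
  iter N st (x, 0) = ((x + N * (n - k.-1)) %% n,
                      if isE ((x + N * (n - k.-1)) %% n) then k - 2 else 0).
Proof.
elim: N => [//|N IH] hr _.
case: (posnP N) => [->|hN]; first by rewrite /= /st /step /= mul1n.
rewrite iterS IH //; last by move=> r hr'; apply: hr; lia.
have := hr N; rewrite hN ltnSn => /(_ isT) /negbTE ->.
by rewrite /st /step /= modnDml mulSn (addnC (n - k.-1)) addnA.
Qed.

Lemma modMG a q : q < g -> (a * g + q) %% n = (a %% m) * g + q.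
Proof.
move=> hq; rewrite Hn {1}(divn_eq a m) mulnDl -addnA -mulnA [m * g]mulnC modnMDl.
rewrite modn_small //.
have : (a %% m).+1 * g <= m * g by rewrite leq_mul2r ltn_pmod ?orbT //; lia.
rewrite mulSn mulnC; lia.
Qed.

Lemma walkE p D : p < s -> D != 0 -> reach (e p, D) (e (p.+1 %% s), dec k D).
Proof.
move=> hp hD; have g0 := g_gt0; have w0 := w_gt0.
case: (ltnP p.+1 s) => hp1.
- rewrite (modn_small hp1); have hn1 := e_lt hp1; have hE1 := e_isE hp1.
  case hdv: (g %| p.+1).
  + set t := p %/ g.
    have hq : p.+1 %/ g = t.+1 by rewrite divnS // hdv.
    have hr0 : p.+1 %% g = 0 by apply/eqP; rewrite -[_ == _]/(g %| p.+1) hdv.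
    have hpe : p.+1 = t.+1 * g by rewrite {1}(divn_eq p.+1 g) hq hr0 addn0.
    have hr : p %% g = g.-1.
      have : p = t * g + g.-1 by move: hpe; rewrite mulSn; lia.
      by move=> ->; rewrite modnMDl modn_small //; lia.
    have e1 : e p = t * w * g + g.-1 by rewrite /e hr.
    have e2 : e p.+1 = t.+1 * w * g by rewrite /e hq hr0 addn0.
    have hN : e p + (w * g - g.-1) = e p.+1.
      rewrite e1 e2 !mulSn mulnDl; have : g <= w * g by rewrite leq_pmull.
      lia.
    exists (w * g - g.-1); rewrite walk //.
    * by rewrite hN modn_small // hE1.
    * move=> r /andP [r0 rN]; rewrite modn_small; last by rewrite -hN in hn1; lia.
      apply/hasPn => t' _; apply/negP => /andP [/eqP ht' _].
      have y1 : (t * w).+1 * g <= e p + r by rewrite mulSn e1 mulnC mulnA; lia.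
      have y2 : e p + r < t.+1 * w * g by rewrite -e2 -hN; lia.
      move: y1; rewrite -leq_divRL // ht' => y1.
      move: y2; rewrite -ltn_divLR // ht' => y2.
      move: y1 y2; rewrite !ltn_pmul2r //; lia.
    * have : g <= w * g by rewrite leq_pmull.
      lia.
  + have hq : p.+1 %/ g = p %/ g by rewrite divnS // hdv.
    have hr : p.+1 %% g = (p %% g).+1 by rewrite modnS hdv.
    have e2 : e p.+1 = (e p).+1 by rewrite /e hq hr addnS.
    exists 1; rewrite walk //; last by move=> r; lia.
    by rewrite addn1 -e2 modn_small // hE1.
- have ps : p.+1 = s by apply/eqP; rewrite eqn_leq hp1 hp.
  rewrite ps modnn (e_small g0).
  have hpe : p = i0 * g + h.-1 by move: ps; rewrite /s; lia.
  have hq : p %/ g = i0 by rewrite hpe divnMDl // divn_small ?addn0 //; lia.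
  have hr : p %% g = h.-1 by rewrite hpe modnMDl modn_small //; lia.
  have e1 : e p = i0 * w * g + h.-1 by rewrite /e hq hr.
  have hn := e_lt hp.
  exists (n - e p); rewrite walk //.
  + by rewrite subnKC ?modnn ?isE_small //; lia.
  + move=> r /andP [r0 rN]; rewrite modn_small; last lia.
    apply/hasPn => t'; rewrite mem_iota add0n ltnS => /andP [_ ht'].
    apply/negP => /andP [/eqP hy hc].
    have y1 : i0 * w * g <= e p + r by lia.
    move: y1; rewrite -leq_divRL // hy leq_pmul2r // => y1.
    have ti : t' = i0 by lia.
    move: hc; rewrite ti ltnn /= => hc.
    have := divn_eq (e p + r) g; rewrite hy ti; lia.
  + lia.
Qed.

Lemma jumpE p : p < s -> reach (e p, 0) (e (nu p), k - 2).
Proof.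
move=> hp; have nk := nk_eq; have g0 := g_gt0; have w0 := w_gt0.
have hq : p %% g < g by rewrite ltn_pmod.
have ht := divs hp.
have hpe : p = p %/ g * g + p %% g := divn_eq p g.
rewrite /nu; case: ifP => hpg.
- have e2 : e (p + g) = e p + w * g.
    have -> : p + g = (p %/ g).+1 * g + p %% g by rewrite mulSn; lia.
    rewrite /e divnMDl // (divn_small hq) addn0 modnMDl (modn_small hq).
    by rewrite mulSn mulnDl; lia.
  exists 1; rewrite jump //; last by move=> r; lia.
  by rewrite mul1n nk -e2 modn_small ?e_isE // e_lt.
- set t := p %/ g in hpe ht *; set q := p %% g in hpe hq *.
  have hep : e p = t * w * g + q by [].
  have hwm : i0 * w < m by [].
  have htm : t < m by lia.
  exists (m - t); rewrite jump; last by lia.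
  + have -> : e p + (m - t) * (n - k.-1) = (m * w) * g + q.
      rewrite nk hep mulnA -addnA [q + _]addnC addnA -!mulnDl.
      by rewrite subnKC // ltnW.
    by rewrite modMG // [m * w]mulnC modnMl mul0n add0n e_small // isE_small.
  + move=> r /andP [r0 rm].
    have -> : e p + r * (n - k.-1) = ((t + r) * w) * g + q.
      by rewrite nk hep mulnA -addnA [q + _]addnC addnA -!mulnDl.
    rewrite modMG //.
    apply/hasPn => t'; rewrite mem_iota add0n ltnS => /andP [_ ht'].
    apply/negP => /andP [/eqP hy hc].
    move: hy hc; rewrite divnMDl // (divn_small hq) addn0 modnMDl (modn_small hq) => hy hc.
    have htt : t' <= t.
      move/negbT: hpg; rewrite -leqNgt /s => hpg.
      case/orP: hc => hc.
        have : i0 * g < (t + 2) * g by rewrite mulnDl; lia.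
        rewrite ltn_pmul2r //; lia.
      have : i0 * g < (t + 1) * g by rewrite mulnDl; lia.
      rewrite ltn_pmul2r //; lia.
    have hw' : t' * w < m.
      by apply: leq_ltn_trans hwm; rewrite leq_mul2r ht' orbT.
    have hle : t' * w <= (t + r) * w by rewrite leq_mul2r; apply/orP; right; lia.
    move/eqP: hy; rewrite -(modn_small hw') eqn_mod_dvd // -mulnBl Gauss_dvdl //.
    move/dvdn_leq; lia.
Qed.
Lemma decN N D : D < k -> iter N (dec k) D = (D + N * (k - 2)) %% k.
Proof.
move=> hD; have hk := k2; elim: N => [|N IH] /=; first by rewrite mul0n addn0 modn_small.
rewrite IH /dec.
have -> : (D + N * (k - 2)) %% k + k - 2 = (D + N * (k - 2)) %% k + (k - 2) by lia.
by rewrite modnDml mulSn (addnC (k - 2)) addnA.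
Qed.

Lemma k_odd : odd k. Proof. by rewrite Hk /= !oddM /= andbF. Qed.

Lemma dec_k2 N : N < k.-1 -> iter N (dec k) (k - 2) != 0.
Proof.
move=> hN; have hk := k2; rewrite decN; last lia.
have -> : k - 2 + N * (k - 2) = N.+1 * (k - 2) by rewrite mulSn.
apply/negP => /eqP h0.
have h1 : k %| N.+1 * (k - 2) by rewrite /dvdn h0.
have h2 : k %| N.+1 * (k - 2) + N.+1 * 2.
  by rewrite -mulnDr subnK // dvdn_mull.
move: h2; rewrite dvdn_addr // Gauss_dvdl; last by rewrite coprimen2 k_odd.
move/dvdn_leq; lia.
Qed.

Lemma dec_k2_end : iter k.-1 (dec k) (k - 2) = 0.
Proof.
have hk := k2; rewrite decN; last lia.
have -> : k - 2 + k.-1 * (k - 2) = k * (k - 2) by rewrite -mulSn prednK //; lia.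
by rewrite modnMr.
Qed.

Lemma s_pos : 0 < s. Proof. have := s_ge; have := g_gt0; lia. Qed.

Lemma walkN N p D : p < s -> D < k -> (forall N', N' < N -> iter N' (dec k) D != 0) ->
  reach (e p, D) (e ((p + N) %% s), iter N (dec k) D).
Proof.
move=> hp hD; elim: N => [|N IH] hN; first by rewrite addn0 modn_small //; exact: reach_refl.
apply: reach_trans (IH _) _; first by move=> N' hN'; apply: hN; lia.
have := walkE (ltn_pmod (p + N) s_pos) (hN N (ltnSn N)).
by rewrite -addn1 modnDml -addnA addn1.
Qed.

Definition W p := nu ((p + k.-1) %% s).

Lemma Wstep p : p < s -> reach (e p, k - 2) (e (W p), k - 2).
Proof.
move=> hp; have hk := k2.
apply: reach_trans (walkN (N := k.-1) hp _ _) _.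
- lia.
- by move=> N' hN'; apply: dec_k2.
rewrite dec_k2_end; apply: jumpE; exact: ltn_pmod s_pos.
Qed.

Lemma i0g : g <= i0 * g. Proof. by rewrite leq_pmull. Qed.

Lemma Wmod1 p : 2 * h <= p -> p < s -> (p + k.-1) %% s = p - 2 * h.
Proof.
move=> h1 h2; have hg0 := i0g.
have -> : p + k.-1 = 2 * s + (p - 2 * h) by rewrite km1 /s; lia.
by rewrite modnMDl modn_small //; lia.
Qed.

Lemma Wmod2 p : p < 2 * h -> (p + k.-1) %% s = p + s - 2 * h.
Proof.
move=> h1; have hg0 := i0g.
have -> : p + k.-1 = s + (p + s - 2 * h) by rewrite km1 /s; lia.
by rewrite modnDl modn_small //; rewrite /s; lia.
Qed.

Lemma W1 p : 2 * h <= p -> p.+1 < s -> W p = p.+1.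
Proof.
move=> h1 h2; rewrite /W Wmod1 //; last lia.
rewrite /nu; have -> : p - 2 * h + g = p.+1 by lia.
by rewrite h2.
Qed.

Lemma i0g' : i0.-1 * g + g = i0 * g.
Proof. by rewrite addnC -mulSn prednK. Qed.

Lemma W2 : W s.-1 = h.
Proof.
have hg0 := i0g; have hg1 := i0g'; have hs : s.-1 < s by rewrite prednK ?s_pos.
rewrite /W Wmod1 //; last by rewrite /s; lia.
rewrite /nu; have -> : s.-1 - 2 * h + g < s = false by rewrite /s; lia.
have -> : s.-1 - 2 * h = i0.-1 * g + h by rewrite /s; lia.
by rewrite modnMDl modn_small //; lia.
Qed.

Lemma W3 p : p < h -> W p = p + h + 1.
Proof.
move=> h1; have hg0 := i0g; have hg1 := i0g'.
rewrite /W Wmod2 //; last lia.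
rewrite /nu; have -> : p + s - 2 * h + g < s = false by rewrite /s; lia.
have -> : p + s - 2 * h = i0.-1 * g + (p + h + 1) by rewrite /s; lia.
by rewrite modnMDl modn_small //; lia.
Qed.

Lemma W4 p : h <= p < 2 * h -> W p = p - h.
Proof.
move=> /andP [h1 h2]; have hg0 := i0g.
rewrite /W Wmod2 //.
rewrite /nu; have -> : p + s - 2 * h + g < s = false by rewrite /s; lia.
have -> : p + s - 2 * h = i0 * g + (p - h) by rewrite /s; lia.
by rewrite modnMDl modn_small //; lia.
Qed.

Definition RT p := reach (e p, k - 2) (e (2 * h), k - 2).

Lemma s_gt : 2 * h < s. Proof. have := s_ge; lia. Qed.

Lemma RT_A q : h <= q <= 2 * h -> RT q.
Proof.
have hs := s_gt.
move Hd : (2 * h - q) => d; elim: d q Hd => [|d IH] q Hd hq.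
  have -> : q = 2 * h by lia.
  exact: reach_refl.
apply: reach_trans (Wstep _) _; first lia.
rewrite W4; last lia.
apply: reach_trans (Wstep _) _; first lia.
rewrite W3; last lia.
have -> : q - h + h + 1 = q.+1 by lia.
apply: IH; lia.
Qed.

Lemma RT_all p : p < s -> RT p.
Proof.
move=> hp; have hs := s_gt.
case: (ltnP p h) => h1.
  apply: reach_trans (Wstep hp) _; rewrite W3 //; apply: RT_A; lia.
case: (leqP p (2 * h)) => h2; first by apply: RT_A; lia.
move Hd : (s.-1 - p) => d; elim: d p Hd hp h1 h2 => [|d IH] p Hd hp h1 h2.
  have -> : p = s.-1 by lia.
  apply: reach_trans (Wstep _) _; first by rewrite prednK ?s_pos.
  rewrite W2; apply: RT_A; lia.
apply: reach_trans (Wstep hp) _; rewrite W1 //; try lia.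
apply: IH; lia.
Qed.
Lemma kn : k < n.
Proof.
have g0 := g_gt0.
have : g * (2 * i0).+1 <= g * m by rewrite leq_mul2l Hml orbT.
rewrite Hn Hk mulnS; lia.
Qed.

Lemma toSigma_pos N j D : j + N = n.-1 -> D != 0 -> D < k ->
  exists p D', [/\ p < s, D' < k & reach (j, D) (e p, D')].
Proof.
have n0 := n_pos.
elim: N j => [|N IH] j hj hD hDk.
- have hE : isE (j.+1 %% n) by rewrite addn0 in hj; rewrite hj prednK // modnn isE_small ?g_gt0.
  have [p [hp hep]] := E_char hE.
  exists p, (dec k D); split => //; first by rewrite /dec ltn_pmod //; have := k2; lia.
  by exists 1; rewrite /= /st /step /= hD hE hep.
- case hE : (isE (j.+1 %% n)).
  + have [p [hp hep]] := E_char hE.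
    exists p, (dec k D); split => //; first by rewrite /dec ltn_pmod //; have := k2; lia.
    by exists 1; rewrite /= /st /step /= hD hE hep.
  + have hj1 : j.+1 + N = n.-1 by lia.
    have [p [D' [hp hD' hr]]] := IH j.+1 hj1 hD hDk.
    exists p, D'; split => //; apply: reach_trans hr.
    exists 1; rewrite /= /st /step /= hD hE modn_small //; lia.
Qed.

Lemma toSigma j D : j < n -> D < k ->
  exists p D', [/\ p < s, D' < k & reach (j, D) (e p, D')].
Proof.
move=> hj hD; case: (posnP D) => [D0|D0]; last first.
  by apply: (@toSigma_pos (n.-1 - j)) => //; lia.
subst D; have g0 := g_gt0; have nk := nk_eq.
pose P r := (0 < r) && isE ((j + r * (n - k.-1)) %% n).
have exP : exists r, P r.
  have m0 : 0 < m by lia.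
  have [a _ ha] := Bezoutl (m - 2 * i0) m0.
  move: ha; rewrite (eqP Hcop) => ha.
  exists (j %/ g * a + m); apply/andP; split; first by rewrite addn_gt0 m0 orbT.
  rewrite nk {1}(divn_eq j g) mulnA -addnA [j %% g + _]addnC addnA -mulnDl.
  rewrite modMG ?ltn_pmod //.
  have -> : (j %/ g + (j %/ g * a + m) * w) %% m = 0.
    move: (j %/ g) => b.
    have -> : b + (b * a + m) * w = w * m + b * (1 + a * w) by nia.
    rewrite modnMDl; apply/eqP; rewrite -/(dvdn _ _).
    by apply: dvdn_mull.
  by rewrite mul0n add0n isE_small // ltn_pmod.
have [r /andP [r0 hr] hmin] := ex_minnP exP.
have hE : isE ((j + r * (n - k.-1)) %% n) by [].
have [p [hp hep]] := E_char hE.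
exists p, (k - 2); split => //; first by have := k2; lia.
exists r; rewrite jump //.
  by rewrite hE hep.
move=> r' /andP [r'0 r'r]; apply/negP => hE'.
have : r <= r' by apply: hmin; rewrite /P r'0.
lia.
Qed.

Lemma toZero p D : p < s -> D < k -> exists p', p' < s /\ reach (e p, D) (e p', 0).
Proof.
move=> hp hD; case: (posnP D) => [->|D0]; first by exists p; split => //; exact: reach_refl.
pose P N := iter N (dec k) D == 0.
have exP : exists N, P N.
  exists (D * (i0 * g).+1); rewrite /P decN //.
  have hk : k = (2 * (i0 * g)).+1 by rewrite Hk; lia.
  have hig := i0g; have g0 := g_gt0.
  move Ha : (i0 * g) => a; rewrite Ha in hk hig.
  case: a Ha hk hig => [|a] Ha hk hig; first lia.
  have -> : D + D * a.+2 * (k - 2) = (D * a.+1) * k.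
    rewrite hk; have -> : (2 * a.+1).+1 - 2 = (2 * a).+1 by lia.
    nia.
  by rewrite modnMl.
have [N hN hmin] := ex_minnP exP.
exists ((p + N) %% s); split; first exact: ltn_pmod s_pos.
have := walkN (N := N) hp hD.
rewrite (eqP hN); apply => N' hN'; apply/negP => h0.
have : N <= N' by apply: hmin.
lia.
Qed.

Lemma reach_x0 x : x.1 < n -> x.2 < k -> exists t, iter t st x = (2 * h, k - 2).
Proof.
case: x => j D /= hj hD.
have [p [D' [hp hD' r1]]] := toSigma hj hD.
have [p' [hp' r2]] := toZero hp hD'.
have r3 := jumpE hp'.
have hnu : nu p' < s.
  rewrite /nu; case: ifP => // _; apply: leq_trans s_ge; exact: ltn_pmod g_gt0.
have r4 := RT_all hnu.
have := reach_trans r1 (reach_trans r2 (reach_trans r3 r4)).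
by rewrite (@e_small (2 * h)) //; have := gs.
Qed.

Lemma dyn_solution (A : {set 'I_n * 'I_n}) : cyc_diag k A ->
  exists R C : 'I_n -> int, is_solution A R C.
Proof.
move=> HA; exists (@Rf n), (@Cf n isE).
apply: (@solution_of_reach n k A isE HA k2 kn (2 * h, k - 2)) => /=.
- by rewrite Hn; have := gs; have := g_gt0; nia.
- by have := k2; lia.
- exact: reach_x0.
Qed.
End Dyn.

Lemma size_flat_iota (F : nat -> nat) g (l : seq nat) :
  size (flatten [seq iota (F s) g | s <- l]) = size l * g.
Proof. by elim: l => [|a l IH] //=; rewrite size_cat size_iota IH mulSn. Qed.

Lemma size_bound (E : seq nat) i (js : nat -> nat) f g : 0 < g -> uniq E ->
  (forall s, 1 <= s <= i.+1 -> 1 <= js s) -> 1 <= f ->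
  (forall x, x \in E =
     [&& [exists s : 'I_i.+2, (1 <= s) && (1 + (js s).-1 * g <= x <= js s * g)] &
         ~~ (js i.+1 * g - f + 1 <= x <= js i.+1 * g)]) ->
  size E < i.+1 * g.
Proof.
move=> g0 uE hjs hf hE.
pose v := js i.+1 * g.
pose F := flatten [seq iota (1 + (js s).-1 * g) g | s <- iota 1 i.+1].
have hmul : forall s, 1 <= js s -> (js s).-1 * g + g = js s * g.
  by move=> s hs; rewrite addnC -mulSn prednK.
have hv : v \in F.
  apply/flatten_mapP; exists i.+1; first by rewrite mem_iota; lia.
  have := hmul i.+1 (hjs i.+1 (ltnSn _)); have := hjs i.+1 (ltnSn _).
  rewrite mem_iota /v; lia.
apply: (@leq_ltn_trans (size [seq x <- F | x != v])).
  apply: uniq_leq_size => // x; rewrite hE => /andP [/existsP [s /andP [s1 hx]] hx'].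
  rewrite mem_filter; apply/andP; split.
    apply: contra hx' => /eqP ->; rewrite /v; apply/andP; split; last by [].
    have h1 := hjs i.+1 (ltnSn _); have h2 : 0 < js i.+1 * g by rewrite muln_gt0 g0 h1.
    lia.
  have hs : 1 <= s <= i.+1 by rewrite s1 -ltnS ltn_ord.
  apply/flatten_mapP; exists (nat_of_ord s); first by rewrite mem_iota; lia.
  have := hmul s (hjs s hs); rewrite mem_iota; lia.
have hF : size F = i.+1 * g by rewrite /F size_flat_iota size_iota.
rewrite size_filter -hF.
rewrite -(count_predC (fun x => x != v) F) -{1}(addn0 (count _ F)) ltn_add2l -has_count.
by apply/hasP; exists v => //=; rewrite eqxx.
Qed.

Lemma js_step m l a b : 0 < a -> a < b -> b <= m -> l < m ->
  b + l = a %[mod m] -> b = a + (m - l).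
Proof.
move=> a0 ab bm lm H.
have hd : b + l = a + (b - a + l) by lia.
have H' : (a + (b - a + l)) %% m = (a + 0) %% m by rewrite addn0 -hd.
move/eqP: H'; rewrite eqn_modDl mod0n => /eqP {}H.
have hdv : m %| b - a + l by rewrite /dvdn H.
have m1 : m <= b - a + l by apply: dvdn_leq => //; lia.
have hdv2 : m %| b - a + l - m by rewrite dvdn_sub.
case: (posnP (b - a + l - m)) => h0; first lia.
have := dvdn_leq h0 hdv2; lia.
Qed.

Lemma js_chain (js : nat -> nat) i w : (forall s, 1 <= s <= i -> js s.+1 = js s + w) ->
  forall s, s <= i -> js s.+1 = js 1 + s * w.
Proof.
move=> H; elim=> [|s IH] hs; first by rewrite addn0.
rewrite H; last lia.
by rewrite IH ?mulSn; lia.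
Qed.

Unset Implicit Arguments.
Theorem proposition5p4 (n k : nat) (A : {set 'I_n * 'I_n}) :
  odd n -> odd k -> 3 <= k -> k < n ->
  cyc_diag k A ->
  let g := gcdn n k.-1 in
  let m := n %/ g in
  let l := k.-1 %/ g in
  (exists E : seq nat,
     [/\ uniq E, {subset E <= iota 1 n},
         size E = k.-1 %/ 2 + g.-1 %/ 2 &
         exists (i : nat) (js : nat -> nat) (f : nat),
           [/\ 1 <= i <= l - 1,
               forall s, 1 <= s <= i.+1 -> 1 <= js s <= m,
               forall s, 1 <= s <= i ->
                 js s < js s.+1 /\ js s.+1 + l = js s %[mod m],
               1 <= f <= g - 1 &
               forall x, x \in E =
                 [&& [exists s : 'I_i.+2, (1 <= s) &&
                        (1 + (js s).-1 * g <= x <= js s * g)] &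
                     ~~ (js i.+1 * g - f + 1 <= x <= js i.+1 * g)]]]) ->
  exists R C : 'I_n -> int, is_solution A R C.
Proof.
move=> on ok k3 kn HA g m l [E [uE _ szE [i [js [f [hi hjs hst hf hE]]]]]].
have n0 : 0 < n by lia.
have g0 : 0 < g by rewrite gcdn_gt0 n0.
have Hn : n = g * m by rewrite /m mulnC divnK // dvdn_gcdl.
have Hkl : k.-1 = g * l by rewrite /l mulnC divnK // dvdn_gcdr.
have godd : odd g by move: on; rewrite Hn oddM => /andP [].
have g3 : 3 <= g.
  have : g != 2 by apply/eqP => e; rewrite e in godd.
  lia.
set h := g./2.
have Hg : g = h.*2.+1 by rewrite -[LHS]odd_double_half godd add1n.
have Hh : 0 < h by lia.
have lodd : odd l = false.
  have : odd k.-1 = false by move: ok; rewrite -{1}(prednK (ltnW (ltnW k3))) /= => /negbTE.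
  by rewrite Hkl oddM godd.
set i0 := l./2.
have Hl : l = 2 * i0 by rewrite -[LHS]odd_double_half lodd add0n -muln2 mulnC.
have Hi0 : 0 < i0 by lia.
have Hk : k = (g * (2 * i0)).+1 by rewrite -Hl -Hkl prednK //; lia.
have Hml : 2 * i0 < m.
  rewrite -Hl -(ltn_pmul2l g0) -Hkl -Hn; lia.
have hw : forall s, 1 <= s <= i -> js s.+1 = js s + (m - l).
  move=> s hs; have [h1 h2] := hst s hs.
  have hs1 : 1 <= s <= i.+1 by lia.
  have hs2 : 1 <= s.+1 <= i.+1 by lia.
  have b1 := hjs s hs1; have b2 := hjs s.+1 hs2.
  apply: js_step => //; lia.
have hch := js_chain hw.
have hfi : i * (m - l) < m.
  have j1 : 0 < 1 <= i.+1 by lia.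
  have ji : 0 < i.+1 <= i.+1 by lia.
  have := hch i (leqnn i); have := hjs i.+1 ji; have := hjs 1 j1.
  move: (js 1) (js i.+1) (i * (m - l)) => a b c; lia.
have szE' : size E = i0 * g + h.
  rewrite szE Hkl Hl mulnCA mulKn // Hg /= -muln2 mulnK //; lia.
have hsz := @size_bound E i js f g g0 uE (fun s hs => proj1 (andP (hjs s hs))) (proj1 (andP hf)) hE.
have ii : i0 <= i.
  have : i0 * g < i.+1 * g by move: hsz; rewrite szE'; lia.
  by rewrite ltn_pmul2r.
have Hfit : i0 * (m - 2 * i0) < m.
  by apply: leq_ltn_trans hfi; rewrite -Hl leq_mul2r ii orbT.
have Hcop : coprime m (m - 2 * i0).
  have gml : gcdn m l = 1.
    apply/eqP; rewrite -(eqn_pmul2r g0) mul1n muln_gcdl -[g in _ == g]/(gcdn n k.-1).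
    by rewrite Hn Hkl !(mulnC g).
  rewrite /coprime -Hl.
  have ml : m = (m - l) + l by lia.
  have e1 : gcdn m (m - l) = gcdn (m - l) l.
    by rewrite gcdnC [X in gcdn _ X]ml gcdnDl.
  have e2 : gcdn l (m - l) = gcdn l m by rewrite -gcdnDl subnKC //; lia.
  by rewrite e1 gcdnC e2 gcdnC gml.
exact: (@dyn_solution n k g m i0 h Hg Hh Hi0 Hn Hk Hml Hfit Hcop A HA).
Qed.
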